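(* Assume $q\equiv1\pmod 4$. Then $S^{(2)}(\beta)=0$ if and only if \[ \begin{cases} 2K(\chi)-(1-\zeta_4)K(\eta_{1/4}\chi)-(1+\zeta_4)K(\eta_{3/4}\chi)\equiv0 \pmod{8\mathcal{P}\,\mathbb{Z}[\zeta_{4k}]} & \text{if } q\equiv1\pmod 8,\\ 4+2K(\chi)+(1-\zeta_4)K(\eta_{1/4}\chi)+(1+\zeta_4)K(\eta_{3/4}\chi)\equiv0 \pmod{8\mathcal{P}\,\mathbb{Z}[\zeta_{4k}]} & \text{if } q\equiv5\pmod 8. \end{cases} \]
   Context: Let $p$ be an odd prime, $m\ge1$, $q=p^m$, $\alpha$ a primitive element of $\mathbb{F}_q$, and $T=q-1$. The binary SLCE sequence $(s_n)_{n\ge0}$ is defined as follows: $s_n=1$ if $\alpha^n+1$ is a nonzero non-square of $\mathbb{F}_q$, and $s_n=0$ otherwise. Put $S(X)=\sum_{n=0}^{T-1}s_nX^n\in\mathbb{F}_2[X]$. For an integer $t\ge0$, the $t$-th Hasse derivative is $S^{(t)}(X)=\sum_{n=t}^{T-1}\binom{n}{t}s_nX^{n-t}$, with coefficients reduced mod $2$. Let $\beta$ be an element of an algebraic closure of $\mathbb{F}_2$ with $\beta^T=1$ and multiplicative order $k>1$ (so $k$ is odd). Let $f$ be the order of $2$ modulo $k$, and write $\zeta_N=e^{2\pi i/N}$. Let $\mathcal{P}$ be a prime ideal of $\mathbb{Z}[\zeta_k]$ containing $2$. Fix a field isomorphism $\phi:\mathbb{F}_2(\beta)=\mathbb{F}_{2^f}\to\mathbb{Z}[\zeta_k]/\mathcal{P}$,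 and let $\zeta$ be the unique complex $k$-th root of unity with $\phi(\beta)=\zeta+\mathcal{P}$. Multiplicative characters of $\mathbb{F}_q$ are homomorphisms $\mathbb{F}_q^*\to\mathbb{C}^*$, extended by value $0$ at $0$. For a rational $j$ with $(q-1)j\in\mathbb{Z}$, $\eta_j$ is the character with $\eta_j(\alpha)=e^{2\pi ij}$. Let $\rho=\eta_{1/2}$ be the quadratic character. Let $\chi$ be the character with $\chi(\alpha^n)=\zeta^n$. For a character $\psi$, set $K(\psi)=\sum_{x\in\mathbb{F}_q}\rho(x)\psi(1-x)$. For an ideal $I$ of $\mathbb{Z}[\zeta_k]$, $I\,\mathbb{Z}[\zeta_{4k}]$ is the ideal it generates in $\mathbb{Z}[\zeta_{4k}]$. *)

(* Defs.v *)
From HB Require Import structures.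
From mathcomp Require Import all_boot all_order all_algebra all_field.
Set Implicit Arguments. Unset Strict Implicit. Unset Printing Implicit Defensive.
Import Order.TTheory GRing.Theory Num.Theory.
Local Open Scope ring_scope.

(* Z[zeta_n] as a subset of algC: integer polynomials evaluated at a
   primitive n-th root of unity (the set does not depend on the choice). *)
Definition Zring (n : nat) (x : algC) : Prop :=
  exists z : algC, n.-primitive_root z /\
    exists pz : {poly int}, x = (map_poly (fun a : int => a%:~R) pz).[z].

Definition prime_ideal_Zring (n : nat) (P : algC -> Prop) : Prop :=
  [/\ (forall x, P x -> Zring n x),
      P 0,
      (forall x y, P x -> P y -> P (x + y)),
      (forall r x, Zring n r -> P x -> P (r * x)) &
      (~ P 1 /\ forall x y, Zring n x -> Zring n y -> P (x * y) -> P x \/ P y)].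

(* F_2(beta) inside a field L of characteristic 2: F_2-combinations of powers. *)
Definition F2adj (L : finFieldType) (b : L) (x : L) : Prop :=
  exists s : seq nat, x = \sum_(i <- s) b ^+ i.

(* phi : L -> algC represents (through chosen representatives) a field
   isomorphism F_2(b) -> Z[zeta_n]/P. *)
Definition iso_mod (L : finFieldType) (b : L) (n : nat) (P : algC -> Prop)
    (phi : L -> algC) : Prop :=
  [/\ (forall x, F2adj b x -> Zring n (phi x)),
      (forall x y, F2adj b x -> F2adj b y -> P (phi (x + y) - (phi x + phi y))),
      (forall x y, F2adj b x -> F2adj b y -> P (phi (x * y) - phi x * phi y)),
      P (phi 1 - 1) &
      ((forall x y, F2adj b x -> F2adj b y -> P (phi x - phi y) -> x = y) /\
       (forall a, Zring n a -> exists2 x, F2adj b x & P (phi x - a)))].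

Definition in_8P_ext (P : algC -> Prop) (n : nat) (x : algC) : Prop :=
  exists (r : nat) (a c : 'I_r -> algC),
    (forall i, P (a i) /\ Zring n (c i)) /\ x = 8 * \sum_(i < r) a i * c i.

(* discrete logarithm to base a (in [0, #|F|-2]) *)
Definition dlog (F : finFieldType) (a x : F) : nat :=
  index x (mkseq (fun i => a ^+ i) #|F|.-1).

Definition mchar (F : finFieldType) (a : F) (w : algC) (x : F) : algC :=
  if x == 0 then 0 else w ^+ dlog a x.

Definition rho (F : finFieldType) (a : F) : F -> algC := mchar a (-1).

Definition Ksum (F : finFieldType) (a : F) (psi : F -> algC) : algC :=
  \sum_(x : F) rho a x * psi (1 - x).

Definition slce (F : finFieldType) (a : F) (n : nat) : bool :=
  (a ^+ n + 1 != 0) && ~~ [exists y : F, y ^+ 2 == a ^+ n + 1].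

Definition slce_poly (F : finFieldType) (a : F) (L : finFieldType) : {poly L} :=
  \sum_(n < #|F|.-1) (slce a n)%:R *: 'X^n.

(* Main.v *)
Require Import Defs.
From HB Require Import structures.
From mathcomp Require Import all_boot all_order all_algebra all_field.
From mathcomp Require Import zify ring lra.
Import Order.TTheory GRing.Theory Num.Theory.
Local Open Scope ring_scope.

Definition ipoly (z : algC) (p : {poly int}) : algC :=
  (map_poly (fun a : int => a%:~R) p).[z].

Lemma ipolyD z p q : ipoly z (p + q) = ipoly z p + ipoly z q.
Proof. by rewrite /ipoly rmorphD hornerD. Qed.
Lemma ipolyM z p q : ipoly z (p * q) = ipoly z p * ipoly z q.
Proof. by rewrite /ipoly rmorphM hornerM. Qed.
Lemma ipolyN z p : ipoly z (- p) = - ipoly z p.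
Proof. by rewrite /ipoly rmorphN hornerN. Qed.
Lemma ipolyC z c : ipoly z c%:P = c%:~R.
Proof. by rewrite /ipoly map_polyC hornerC. Qed.
Lemma ipolyXn z j : ipoly z 'X^j = z ^+ j.
Proof. by rewrite /ipoly map_polyXn hornerXn. Qed.

Lemma ZringE n z0 x : n.-primitive_root z0 ->
  Zring n x <-> exists p, x = ipoly z0 p.
Proof.
move=> pz0; split; last by move=> [p ->]; exists z0; split => //; exists p.
move=> [z [pz [p ->]]].
have [j ->] := prim_rootP pz0 (prim_expr_order pz).
exists (p \Po 'X^j).
by rewrite /ipoly map_comp_poly horner_comp map_polyXn hornerXn.
Qed.

Arguments ZringE {n z0} x.

Lemma Zring_ex n : (0 < n)%N -> {z0 : algC | n.-primitive_root z0}.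
Proof. exact: C_prim_root_exists. Qed.

Lemma Zring_add n x y : (0 < n)%N -> Zring n x -> Zring n y -> Zring n (x + y).
Proof.
move=> /Zring_ex [z0 pz0] /(ZringE _ pz0) [p ->] /(ZringE _ pz0) [q ->].
by apply/(ZringE _ pz0); exists (p + q); rewrite ipolyD.
Qed.
Lemma Zring_mul n x y : (0 < n)%N -> Zring n x -> Zring n y -> Zring n (x * y).
Proof.
move=> /Zring_ex [z0 pz0] /(ZringE _ pz0) [p ->] /(ZringE _ pz0) [q ->].
by apply/(ZringE _ pz0); exists (p * q); rewrite ipolyM.
Qed.
Lemma Zring_opp n x : (0 < n)%N -> Zring n x -> Zring n (- x).
Proof.
move=> /Zring_ex [z0 pz0] /(ZringE _ pz0) [p ->].
by apply/(ZringE _ pz0); exists (- p); rewrite ipolyN.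
Qed.
Lemma Zring_sub n x y : (0 < n)%N -> Zring n x -> Zring n y -> Zring n (x - y).
Proof. by move=> n0 hx hy; apply: Zring_add => //; apply: Zring_opp. Qed.
Lemma Zring_int n (c : int) : (0 < n)%N -> Zring n c%:~R.
Proof.
move=> /Zring_ex [z0 pz0]; by apply/(ZringE _ pz0); exists c%:P; rewrite ipolyC.
Qed.
Lemma Zring_nat n (c : nat) : (0 < n)%N -> Zring n c%:R.
Proof. by move=> n0; have := @Zring_int n (Posz c) n0. Qed.
Lemma Zring_root n x : (0 < n)%N -> x ^+ n = 1 -> Zring n x.
Proof.
move=> /Zring_ex [z0 pz0] xn; have [j ->] := prim_rootP pz0 xn.
by apply/(ZringE _ pz0); exists 'X^j; rewrite ipolyXn.
Qed.
Lemma Zring_exp n x j : (0 < n)%N -> Zring n x -> Zring n (x ^+ j).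
Proof.
move=> n0 hx; elim: j => [|j IH]; first by rewrite expr0; apply: Zring_root => //; rewrite expr1n.
by rewrite exprS; apply: Zring_mul.
Qed.
Lemma Zring_sum n (I : Type) (r : seq I) (Q : pred I) (F : I -> algC) : (0 < n)%N ->
  (forall i, Q i -> Zring n (F i)) -> Zring n (\sum_(i <- r | Q i) F i).
Proof.
move=> n0 hF; elim/big_rec: _ => [|i x Qi hx]; first by have := Zring_nat n 0 n0.
by apply: Zring_add => //; apply: hF.
Qed.
Lemma Zring_1 n : (0 < n)%N -> Zring n 1.
Proof. by move=> n0; apply: Zring_root => //; rewrite expr1n. Qed.
Lemma Zring_0 n : (0 < n)%N -> Zring n 0.
Proof. by move=> n0; have := Zring_nat n 0 n0. Qed.

Set Implicit Arguments. Unset Strict Implicit.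


Lemma P_Zr k P x : prime_ideal_Zring k P -> P x -> Zring k x.
Proof. by case=> h _ _ _ _; apply: h. Qed.
Lemma P_0 k P : prime_ideal_Zring k P -> P 0.
Proof. by case. Qed.
Lemma P_add k P x y : prime_ideal_Zring k P -> P x -> P y -> P (x + y).
Proof. by case=> _ _ h _ _; apply: h. Qed.
Lemma P_mull k P r x : prime_ideal_Zring k P -> Zring k r -> P x -> P (r * x).
Proof. by case=> _ _ _ h _; apply: h. Qed.
Lemma P_mulr k P r x : prime_ideal_Zring k P -> Zring k r -> P x -> P (x * r).
Proof. by move=> HP hr hx; rewrite mulrC; apply: P_mull hr hx. Qed.
Lemma P_opp k P x : (0 < k)%N -> prime_ideal_Zring k P -> P x -> P (- x).
Proof.
move=> k0 HP hx; rewrite -mulN1r; apply: P_mull HP _ hx.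
by apply: Zring_opp => //; apply: Zring_1.
Qed.
Lemma P_sub k P x y : (0 < k)%N -> prime_ideal_Zring k P -> P x -> P y -> P (x - y).
Proof. by move=> k0 HP hx hy; exact: (P_add HP hx (P_opp k0 HP hy)). Qed.
Lemma P_sum k P (I : Type) (r : seq I) (Q : pred I) (F : I -> algC) :
  prime_ideal_Zring k P ->
  (forall i, Q i -> P (F i)) -> P (\sum_(i <- r | Q i) F i).
Proof.
move=> HP hF; elim/big_rec: _ => [|i x Qi hx]; first exact: P_0 HP.
by apply: P_add HP _ hx; apply: hF.
Qed.

Lemma cg_trans k P x y z : (0 < k)%N -> prime_ideal_Zring k P ->
  P (x - y) -> P (y - z) -> P (x - z).
Proof.
move=> k0 HP h1 h2; have := P_add HP h1 h2.
by rewrite addrA subrK.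
Qed.
Lemma cg_sym k P x y : (0 < k)%N -> prime_ideal_Zring k P ->
  P (x - y) -> P (y - x).
Proof. by move=> k0 HP h; rewrite -opprB; exact: (P_opp k0 HP h). Qed.
Lemma cg_add k P x y x' y' : prime_ideal_Zring k P ->
  P (x - x') -> P (y - y') -> P ((x + y) - (x' + y')).
Proof.
move=> HP h1 h2; have := P_add HP h1 h2.
by rewrite opprD addrACA.
Qed.
Lemma cg_mul k P x y x' y' : (0 < k)%N -> prime_ideal_Zring k P ->
  Zring k x -> Zring k y' ->
  P (x - x') -> P (y - y') -> P ((x * y) - (x' * y')).
Proof.
move=> k0 HP zx zy' h1 h2.
have -> : x * y - x' * y' = x * (y - y') + y' * (x - x') by ring.
exact: (P_add HP (P_mull HP zx h2) (P_mull HP zy' h1)).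
Qed.

(* decomposition Z[zeta_4k] = Z[zeta_k] + i Z[zeta_k] *)
Definition Dk k (x : algC) := exists c1 c2, [/\ Zring k c1, Zring k c2 & x = c1 + 'i * c2].

Lemma Dk_Zr k x : (0 < k)%N -> Zring k x -> Dk k x.
Proof. move=> k0 h; exists x, 0; split => //; [exact: (Zring_nat k 0 k0)| by rewrite mulr0 addr0]. Qed.
Lemma Dk_add k x y : (0 < k)%N -> Dk k x -> Dk k y -> Dk k (x + y).
Proof.
move=> k0 [a [b [ha hb ->]]] [c [d [hc hd ->]]].
exists (a + c), (b + d); split; try apply: Zring_add => //; ring.
Qed.
Lemma Dk_mul k x y : (0 < k)%N -> Dk k x -> Dk k y -> Dk k (x * y).
Proof.
move=> k0 [a [b [ha hb ->]]] [c [d [hc hd ->]]].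
exists (a * c - b * d), (a * d + b * c); split.
- by apply: Zring_sub => //; apply: Zring_mul.
- by apply: Zring_add => //; apply: Zring_mul.
have hi : 'i * 'i = -1 :> algC by rewrite -expr2 sqrCi.
have -> : (a + 'i * b) * (c + 'i * d) = a * c + ('i * 'i) * b * d + 'i * (a * d + b * c) by ring.
rewrite hi; ring.
Qed.
Lemma Dk_exp k x j : (0 < k)%N -> Dk k x -> Dk k (x ^+ j).
Proof.
move=> k0 hx; elim: j => [|j IH].
  by rewrite expr0; apply: Dk_Zr => //; apply: Zring_1.
by rewrite exprS; apply: Dk_mul.
Qed.

Lemma sq_eq1 (x : algC) : x ^+ 2 = 1 -> x = 1 \/ x = -1.
Proof.
move=> h; have : (x - 1) * (x + 1) = 0 by rewrite -subr_sqr h expr1n subrr.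
move/eqP; rewrite mulf_eq0 => /orP [/eqP|/eqP] h'.
  by left; apply/eqP; rewrite -subr_eq0 h'.
by right; apply/eqP; rewrite -subr_eq0 opprK h'.
Qed.

Lemma Dk_prim k w : odd k -> (4 * k).-primitive_root w -> Dk k w.
Proof.
move=> ok pw; have k0 : (0 < k)%N by case: (posnP k) ok => // ->.
have w4k := prim_expr_order pw.
have hwk : (w ^+ k) ^+ 2 = -1.
  have h : ((w ^+ k) ^+ 2) ^+ 2 = 1.
    by rewrite -!exprM (_ : (k * (2 * 2) = 4 * k)%N) ?w4k //; lia.
  case: (sq_eq1 h) => // h2.
  have : (4 * k <= k * 2)%N.
    by apply: dvdn_leq; [lia | rewrite (prim_order_dvd pw) exprM h2].
  lia.
have wk : w ^+ k = 'i \/ w ^+ k = - 'i.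
  have : (w ^+ k - 'i) * (w ^+ k + 'i) = 0 by rewrite -subr_sqr hwk sqrCi subrr.
  move/eqP; rewrite mulf_eq0 => /orP [/eqP|/eqP] h'.
    by left; apply/eqP; rewrite -subr_eq0 h'.
  by right; apply/eqP; rewrite -subr_eq0 opprK h'.
have Dwk : Dk k (w ^+ k).
  case: wk => ->.
    exists 0, 1; split; try (by rewrite mulr1 add0r); [exact: (Zring_nat k 0 k0) | exact: (Zring_nat k 1 k0)].
  exists 0, (-1); split; try (by rewrite mulrN1 add0r); first exact: (Zring_nat k 0 k0).
  by apply: Zring_opp => //; exact: (Zring_nat k 1 k0).
have Dw4 : Dk k (w ^+ 4).
  by apply: (Dk_Zr k0); apply: (Zring_root k _ k0); rewrite -exprM w4k.
have [m km] : exists m, k = (2 * m + 1)%N.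
  by exists k./2; rewrite -{1}(odd_double_half k) ok addnC -muln2 mulnC.
have e : (1 + 4 * k * (m * (m + 1)) = k * k + 4 * ((k - 1) * (m * (m + 1))))%N.
  rewrite km; nia.
have -> : w = (w ^+ k) ^+ k * (w ^+ 4) ^+ ((k - 1) * (m * (m + 1))).
  by rewrite -!exprM -exprD -e exprD exprM w4k expr1n mulr1 expr1.
by apply: Dk_mul => //; apply: Dk_exp.
Qed.

Lemma Dk_Z4k k x : odd k -> Zring (4 * k) x -> Dk k x.
Proof.
move=> ok; have k0 : (0 < k)%N by case: (posnP k) ok => // ->.
move=> [w [pw [p ->]]]; have Dw := Dk_prim ok pw.
elim/poly_ind: p => [|p c IH].
  by rewrite rmorph0 horner0; apply: Dk_Zr => //; exact: (Zring_nat k 0 k0).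
rewrite rmorphD rmorphM /= map_polyX map_polyC hornerD hornerMX hornerC /=.
by apply: Dk_add => //; [apply: Dk_mul | apply: Dk_Zr => //; apply: Zring_int].
Qed.

Lemma ideal_ext k P y : odd k -> prime_ideal_Zring k P -> Zring k y ->
  in_8P_ext P (4 * k) (- (8 * y)) <-> P y.
Proof.
move=> ok HP zy; have k0 : (0 < k)%N by case: (posnP k) ok => // ->.
split; last first.
  move=> Py; exists 1%N, (fun _ => - y), (fun _ => 1); split.
    move=> _; split; first exact: (P_opp k0 HP Py).
    by apply: Zring_1; lia.
  by rewrite big_ord1 mulr1 mulrN.
move=> [r [a [c [hac hE]]]].
have n8 : (8 : algC) != 0 by rewrite pnatr_eq0.
have h : - y = \sum_(i < r) a i * c i by apply: (mulfI n8); rewrite -hE mulrN.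
have [A [B [PA PB hAB]]] : exists A B, [/\ P A, P B & \sum_(i < r) a i * c i = A + 'i * B].
  apply: (big_ind (fun x => exists A B, [/\ P A, P B & x = A + 'i * B])).
  - by exists 0, 0; rewrite mulr0 addr0; split => //; exact: P_0 HP.
  - move=> x1 x2 [A1 [B1 [h1 h2 ->]]] [A2 [B2 [h3 h4 ->]]].
    exists (A1 + A2), (B1 + B2); split; try apply: P_add HP _ _ => //; ring.
  - move=> i _; have [Pa zc] := hac i.
    have [c1 [c2 [z1 z2 ->]]] := Dk_Z4k ok zc.
    exists (a i * c1), (a i * c2); split; try apply: P_mulr HP _ _ => //; ring.
have zA := P_Zr HP PA; have zB := P_Zr HP PB.
have hsq : P ((- y - A) * (- y - A)).
  have -> : (- y - A) * (- y - A) = (- B) * B.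
    rewrite h hAB; have hi : 'i * 'i = -1 :> algC by rewrite -expr2 sqrCi.
    have -> : A + 'i * B - A = 'i * B by ring.
    by rewrite mulrACA hi mulN1r mulNr.
  by apply: P_mull HP _ PB; apply: Zring_opp.
case: HP => [H1 H2 H3 H4 [H5 H6]].
have z1 : Zring k (- y - A) by apply: Zring_sub => //; apply: Zring_opp.
have : P (- y - A) by case: (H6 _ _ z1 z1 hsq).
move=> h2; have := P_opp k0 (And5 H1 H2 H3 H4 (conj H5 H6)) (P_add (And5 H1 H2 H3 H4 (conj H5 H6)) h2 PA).
by rewrite subrK opprK.
Qed.


Lemma F2adj_sum (L : finFieldType) (b : L) (r : seq nat) (Q : pred nat) :
  F2adj b (\sum_(n <- r | Q n) b ^+ n).
Proof. by exists [seq n <- r | Q n]; rewrite big_filter. Qed.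

Lemma F2adj_pow (L : finFieldType) (b : L) j : F2adj b (b ^+ j).
Proof. by exists [:: j]; rewrite big_seq1. Qed.

Lemma F2adj_0 (L : finFieldType) (b : L) : F2adj b 0.
Proof. by exists [::]; rewrite big_nil. Qed.

Lemma phi0 (L : finFieldType) (b : L) k P phi :
  (0 < k)%N -> prime_ideal_Zring k P -> iso_mod b k P phi -> P (phi 0).
Proof.
move=> k0 HP [_ hadd _ _ _].
have := hadd 0 0 (F2adj_0 b) (F2adj_0 b); rewrite addr0 opprD addrA subrr add0r.
move=> h; have := P_opp k0 HP h; by rewrite opprK.
Qed.

Lemma phi_pow (L : finFieldType) (b : L) k P phi zeta j :
  (0 < k)%N -> prime_ideal_Zring k P -> iso_mod b k P phi ->
  zeta ^+ k = 1 -> P (phi b - zeta) -> P (phi (b ^+ j) - zeta ^+ j).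
Proof.
move=> k0 HP iso zk hb; have [hZ hadd hmul h1 _] := iso.
have zz : Zring k zeta by apply: Zring_root.
elim: j => [|j IH]; first by rewrite !expr0.
rewrite !exprSr.
have h := hmul _ _ (F2adj_pow b j) (F2adj_pow b 1); rewrite expr1 in h.
apply: (cg_trans k0 HP h).
apply: (cg_mul k0 HP _ zz IH hb).
by apply: hZ; exact: F2adj_pow.
Qed.

Lemma phi_sum (L : finFieldType) (b : L) k P phi zeta (r : seq nat) (Q : pred nat) :
  (0 < k)%N -> prime_ideal_Zring k P -> iso_mod b k P phi ->
  zeta ^+ k = 1 -> P (phi b - zeta) ->
  P (phi (\sum_(n <- r | Q n) b ^+ n) - \sum_(n <- r | Q n) zeta ^+ n).
Proof.
move=> k0 HP iso zk hb; have [hZ hadd hmul h1 _] := iso.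
elim: r => [|n r IH]; first by rewrite !big_nil subr0; exact: phi0 k0 HP iso.
rewrite !big_cons; case: (Q n) => //.
have h := hadd _ _ (F2adj_pow b n) (F2adj_sum b r Q).
apply: (cg_trans k0 HP h).
exact: (cg_add HP (phi_pow n k0 HP iso zk hb) IH).
Qed.

Lemma sum_zero (L : finFieldType) (b : L) k P phi zeta (r : seq nat) (Q : pred nat) :
  (0 < k)%N -> prime_ideal_Zring k P -> iso_mod b k P phi ->
  zeta ^+ k = 1 -> P (phi b - zeta) ->
  (\sum_(n <- r | Q n) b ^+ n = 0) <-> P (\sum_(n <- r | Q n) zeta ^+ n).
Proof.
move=> k0 HP iso zk hb; have [hZ hadd hmul h1 [hinj _]] := iso.
have hs := phi_sum r Q k0 HP iso zk hb.
have p0 := phi0 k0 HP iso.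
split.
  move=> e; rewrite e in hs.
  have := P_sub k0 HP p0 hs; by rewrite opprB addrC subrK.
move=> hP; apply: hinj; [exact: F2adj_sum | exact: F2adj_0 |].
have h2 := P_add HP hs hP; rewrite subrK in h2.
exact: P_sub k0 HP h2 p0.
Qed.



Lemma dlog_pow (F : finFieldType) (a : F) n : (#|F|.-1).-primitive_root a ->
  dlog a (a ^+ n) = (n %% #|F|.-1)%N.
Proof.
move=> pa; have T0 := prim_order_gt0 pa.
rewrite /dlog -(prim_expr_mod pa).
have hs : (n %% #|F|.-1 < size (mkseq (fun i => a ^+ i) #|F|.-1))%N.
  by rewrite size_mkseq ltn_mod.
rewrite -{1}(nth_mkseq 0 (fun i => a ^+ i) (ltn_pmod n T0)).
apply: index_uniq => //.
rewrite map_inj_in_uniq ?iota_uniq // => i j; rewrite !mem_iota !add0n => hi hj.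
move/eqP; rewrite (eq_prim_root_expr pa) !modn_small //; by move/eqP.
Qed.

Lemma mchar_pow (F : finFieldType) (a : F) (w : algC) n :
  (#|F|.-1).-primitive_root a -> w ^+ #|F|.-1 = 1 ->
  mchar a w (a ^+ n) = w ^+ n.
Proof.
move=> pa wT; rewrite /mchar expf_eq0 (prim_root_eq0 pa) (gtn_eqF (prim_order_gt0 pa)) andbF /=.
by rewrite dlog_pow // expr_mod.
Qed.

Lemma nz_pow (F : finFieldType) (a : F) x : (#|F|.-1).-primitive_root a ->
  x != 0 -> exists j, x = a ^+ j.
Proof.
move=> pa x0; have : x ^+ #|F|.-1 = 1.
  apply: (mulIf x0); rewrite mul1r -exprSr prednK ?expf_card //.
  by apply/card_gt0P; exists 0.
by move/(prim_rootP pa) => [j ->]; exists j.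
Qed.

Lemma sum_nz (F : finFieldType) (a : F) (h : F -> algC) :
  (#|F|.-1).-primitive_root a ->
  \sum_(x : F) h x = h 0 + \sum_(i < #|F|.-1) h (a ^+ i).
Proof.
move=> pa; rewrite (bigD1 0) //=; congr (_ + _).
have inj : injective (fun i : 'I_#|F|.-1 => a ^+ i).
  move=> i j /eqP; rewrite (eq_prim_root_expr pa) !modn_small //; by move/eqP/val_inj.
have -> : \sum_(i < #|F|.-1) h (a ^+ i) = \sum_(x in (fun i : 'I_#|F|.-1 => a ^+ i) @: setT) h x.
  by rewrite big_imset //= ; [apply: eq_bigl => i; rewrite inE | move=> i j _ _; apply: inj].
have -> : (fun i : 'I_#|F|.-1 => a ^+ i) @: setT = [set~ 0].
  apply/eqP; rewrite eq_sym eqEcard cardsC1 card_imset // cardsT card_ord leqnn andbT.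
  apply/subsetP => x; rewrite in_setC1 => x0; have [j ->] := nz_pow pa x0.
  apply/imsetP; exists (Ordinal (ltn_pmod j (prim_order_gt0 pa))) => //=.
  by rewrite prim_expr_mod.
by apply: eq_bigl => x; rewrite in_setC1.
Qed.

Lemma half_neg (F : finFieldType) (a : F) : (#|F|.-1).-primitive_root a ->
  (2 %| #|F|.-1)%N -> a ^+ (#|F|.-1)./2 = -1.
Proof.
move=> pa d2; have T0 := prim_order_gt0 pa.
have eT : ((#|F|.-1)./2 * 2 = #|F|.-1)%N.
  have odT : odd #|F|.-1 = false by apply/negbTE; rewrite -dvdn2.
  by rewrite muln2 -{2}(odd_double_half #|F|.-1) odT.
have h : (a ^+ (#|F|.-1)./2 - 1) * (a ^+ (#|F|.-1)./2 + 1) = 0.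
  by rewrite -subr_sqr -exprM eT (prim_expr_order pa) expr1n subrr.
move/eqP: h; rewrite mulf_eq0 => /orP [|/eqP h]; last first.
  by apply/eqP; rewrite -subr_eq0 opprK h.
rewrite subr_eq0 -(prim_order_dvd pa) => hd.
have := dvdn_leq _ hd; have : (0 < (#|F|.-1)./2)%N by lia.
move=> h1 /(_ h1); lia.
Qed.

Lemma sq_pow (F : finFieldType) (a : F) j : (#|F|.-1).-primitive_root a ->
  (2 %| #|F|.-1)%N -> [exists y : F, y ^+ 2 == a ^+ j] = ~~ odd j.
Proof.
move=> pa d2; apply/existsP/idP.
  move=> [y /eqP hy].
  have y0 : y != 0.
    apply/eqP => e; move/eqP: hy; rewrite e expr0n /= eq_sym expf_eq0 (prim_root_eq0 pa).
    by rewrite (gtn_eqF (prim_order_gt0 pa)) andbF.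
  have [i hi] := nz_pow pa y0; move: hy; rewrite hi -exprM => /eqP.
  rewrite (eq_prim_root_expr pa) => /eqP hm.
  have odT : odd #|F|.-1 = false by apply/negbTE; rewrite -dvdn2.
  by rewrite -(odd_mod j odT) -hm (odd_mod _ odT) oddM andbF.
move=> ev; exists (a ^+ j./2); rewrite -exprM; apply/eqP; congr (_ ^+ _).
by rewrite muln2 -{2}(odd_double_half j) (negbTE ev).
Qed.

Lemma rho_pow (F : finFieldType) (a : F) j : (#|F|.-1).-primitive_root a ->
  (2 %| #|F|.-1)%N -> rho a (a ^+ j) = (-1) ^+ j.
Proof.
move=> pa d2; rewrite /rho mchar_pow //.
by rewrite -signr_odd (_ : odd _ = false) //; apply/negbTE; rewrite -dvdn2.
Qed.

Lemma rho0 (F : finFieldType) (a : F) : rho a 0 = 0.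
Proof. by rewrite /rho /mchar eqxx. Qed.

Lemma slce_rho (F : finFieldType) (a : F) n : (#|F|.-1).-primitive_root a ->
  (2 %| #|F|.-1)%N ->
  2 * ((slce a n)%:R : algC) = 1 - rho a (a ^+ n + 1) - ((a ^+ n + 1 == 0)%:R).
Proof.
move=> pa d2; rewrite /slce.
have [->|x0] := eqVneq (a ^+ n + 1) 0.
  by rewrite rho0 /= mulr0 subr0 subrr.
have [j hj] := nz_pow pa x0; rewrite hj sq_pow // rho_pow // negbK /= subr0.
rewrite -signr_odd; case: (odd j); rewrite /= ?expr1 ?expr0 ?mulr1 ?mulr0 ?subrr //; ring.
Qed.

Lemma Ksum_rel (F : finFieldType) (a : F) (g : F -> algC) (v : algC) :
  (#|F|.-1).-primitive_root a -> (2 %| #|F|.-1)%N ->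
  g 0 = 0 -> (forall n, g (a ^+ n) = v ^+ n) -> v ^+ #|F|.-1 = 1 ->
  \sum_(n < #|F|.-1) v ^+ n * rho a (a ^+ n + 1) = v ^+ (#|F|.-1)./2 * Ksum a g.
Proof.
move=> pa d2 g0 gv vT.
have eT : ((#|F|.-1)./2 + (#|F|.-1)./2 = #|F|.-1)%N.
  have odT : odd #|F|.-1 = false by apply/negbTE; rewrite -dvdn2.
  by rewrite addnn -{2}(odd_double_half #|F|.-1) odT.
have hK : Ksum a g = \sum_(i < #|F|.-1) v ^+ (#|F|.-1)./2 * (v ^+ i * rho a (a ^+ i + 1)).
  rewrite /Ksum (reindex_inj (addrI 1)) /=.
  rewrite (sum_nz (fun x => rho a (1 + x) * g (1 - (1 + x))) pa) /=.
  rewrite opprD addrA subrr add0r oppr0 g0 mulr0 add0r.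
  apply: eq_bigr => i _.
  rewrite opprD addrA subrr add0r -mulN1r -(half_neg pa d2) -exprD gv exprD addrC.
  ring.
rewrite hK mulr_sumr; apply: eq_bigr => i _.
by rewrite mulrA -exprD eT vT mul1r.
Qed.

Lemma delta_sum (F : finFieldType) (a : F) (v : algC) :
  (#|F|.-1).-primitive_root a -> (2 %| #|F|.-1)%N ->
  \sum_(n < #|F|.-1) v ^+ n * ((a ^+ n + 1 == 0)%:R) = v ^+ (#|F|.-1)./2.
Proof.
move=> pa d2; have T0 := prim_order_gt0 pa.
have hlt : ((#|F|.-1)./2 < #|F|.-1)%N by lia.
rewrite (bigD1 (Ordinal hlt)) //= big1 ?addr0.
  by rewrite addr_eq0 -(half_neg pa d2) eqxx mulr1.
move=> i /eqP ni; rewrite addr_eq0 -(half_neg pa d2) (eq_prim_root_expr pa).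
rewrite !modn_small //; case: eqP => [e|]; last by rewrite mulr0.
by case: ni; apply: val_inj.
Qed.

Lemma geo_sum (v : algC) N : v != 1 -> v ^+ N = 1 -> \sum_(n < N) v ^+ n = 0.
Proof.
move=> v1 vN; have := subrX1 v N; rewrite vN subrr => /esym/eqP.
by rewrite mulf_eq0 subr_eq0 (negbTE v1) /= => /eqP.
Qed.


Lemma odd_bin2 n : odd 'C(n, 2) = (2 <= n %% 4)%N.
Proof.
elim: n => [|n IH] //.
rewrite binS bin1 oddD IH.
have := ltn_pmod n (isT : (0 < 4)%N); rewrite -(@odd_mod n 4) //.
have -> : (n.+1 %% 4 = if n %% 4 == 3 then 0 else (n %% 4).+1)%N.
  rewrite -addn1 -modnDml; have := ltn_pmod n (isT : (0 < 4)%N).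
  by case: (n %% 4)%N => [|[|[|[|m]]]].
by case: (n %% 4)%N => [|[|[|[|m]]]].
Qed.

Lemma mulrn_char2 (L : finFieldType) (x : L) m : (2 \in [pchar L])%N ->
  x *+ m = if odd m then x else 0.
Proof.
move=> ch; rewrite -{1}(odd_double_half m) mulrnDr -muln2 mulnC mulrnA.
have -> : x *+ 2 = 0 by rewrite -mulr_natr (pcharf0 ch) mulr0.
by rewrite mul0rn addr0; case: (odd m); rewrite ?mulr1n ?mulr0n.
Qed.

Lemma S2_zero (L : finFieldType) (b : L) (N : nat) (c : nat -> bool) :
  (2 \in [pchar L])%N -> b != 0 ->
  ((\sum_(n < N) (c n)%:R *: 'X^n)^`N(2)).[b] = 0 <->
  \sum_(n <- index_iota 0 N | c n && (2 <= n %% 4)%N) b ^+ n = 0.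
Proof.
move=> ch b0.
rewrite linear_sum horner_sum big_mkord big_mkcond /=.
have -> : \sum_(i < N) ((c i)%:R *: 'X^i : {poly L})^`N(2).[b] =
  \sum_(i < N) (b ^+ 2)^-1 * (if c i && (2 <= i %% 4)%N then b ^+ i else 0).
  apply: eq_bigr => i _.
  rewrite nderivnZ nderivnXn hornerZ hornerMn hornerXn.
  case: (c i) => /=; last by rewrite mul0r mulr0.
  rewrite mul1r (@mulrn_char2 _ (b ^+ (i - 2))) // odd_bin2.
  case: ltnP => h; last by rewrite mulr0.
  have i2 : (2 <= i)%N.
    by case: (i : nat) h => [|[|j]] //.
  by rewrite -{2}(subnKC i2) exprD mulKf // expf_neq0.
rewrite -mulr_sumr [in X in _ <-> X]big_mkcond /=; split => [|->]; last by rewrite mulr0.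
move/eqP; rewrite mulf_eq0 invr_eq0 expf_eq0 (negbTE b0) andbF /=.
by move/eqP.
Qed.


Lemma i4 : 'i ^+ 4 = 1 :> algC.
Proof. by rewrite (exprM ('i) 2 2) sqrCi sqrrN expr1n. Qed.

Lemma ind4 n : 2 + ('i - 1) * 'i ^+ n - (1 + 'i) * ('i ^+ n) ^+ 3 =
  4 * ((2 <= n %% 4)%N%:R : algC).
Proof.
have hi : 'i * 'i = -1 :> algC by rewrite -expr2 sqrCi.
have i3 : 'i ^+ 3 = - 'i :> algC by rewrite exprS sqrCi mulrN1.
rewrite -(expr_mod n i4); have := ltn_pmod n (isT : (0 < 4)%N).
case: (n %% 4)%N => [|[|[|[|r]]]] // _.
- by rewrite expr0 expr1n /=; ring.
- by rewrite expr1 i3 /= !(mulrDl, mulrBl, mulrN, mulNr, mulrDr, mulrBr) hi; ring.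
- by rewrite sqrCi /= -signr_odd /= expr1 !(mulrDl, mulrBl, mulrN, mulNr) ; ring.
- by rewrite i3 /= exprNn i3 -signr_odd /= expr1 !(mulrDl, mulrBl, mulrN, mulNr, mulrDr, mulrBr, mul1r, mulr1) hi; ring.
Qed.

Definition Sv (F : finFieldType) (a : F) (v : algC) :=
  \sum_(n < #|F|.-1) v ^+ n * (1 - rho a (a ^+ n + 1) - ((a ^+ n + 1 == 0)%:R)).

Lemma S_val (F : finFieldType) (a : F) (g : F -> algC) (v : algC) :
  (#|F|.-1).-primitive_root a -> (2 %| #|F|.-1)%N ->
  g 0 = 0 -> (forall n, g (a ^+ n) = v ^+ n) -> v ^+ #|F|.-1 = 1 -> v != 1 ->
  Sv a v = - (v ^+ (#|F|.-1)./2 * (Ksum a g + 1)).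
Proof.
move=> pa d2 g0 gv vT v1; rewrite /Sv.
rewrite (eq_bigr (fun n : 'I_#|F|.-1 => v ^+ n - v ^+ n * rho a (a ^+ n + 1)
   - v ^+ n * ((a ^+ n + 1 == 0)%:R))); last by move=> i _; ring.
rewrite !sumrB geo_sum // (Ksum_rel pa d2 g0 gv vT) delta_sum //; ring.
Qed.

Lemma key8 (F : finFieldType) (a : F) (zeta : algC) :
  (#|F|.-1).-primitive_root a -> (2 %| #|F|.-1)%N ->
  8 * \sum_(n <- index_iota 0 #|F|.-1 | slce a n && (2 <= n %% 4)%N) zeta ^+ n =
  2 * Sv a zeta + ('i - 1) * Sv a ('i * zeta) - (1 + 'i) * Sv a ('i ^+ 3 * zeta).
Proof.
move=> pa d2; rewrite /Sv big_mkord big_mkcond !mulr_sumr -big_split /= -sumrB.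
apply: eq_bigr => n _.
rewrite -(slce_rho n pa d2) !exprMn.
rewrite [RHS](_ : _ = (2 + ('i - 1) * 'i ^+ n - (1 + 'i) * ('i ^+ n) ^+ 3) *
   (2 * (slce a n)%:R) * zeta ^+ n); last by ring.
rewrite ind4; case: (slce a n); case: (2 <= n %% 4)%N => /=; ring.
Qed.


Lemma char2_sq (L : finFieldType) (x : L) : (2 \in [pchar L])%N -> x ^+ 2 = 1 -> x = 1.
Proof.
move=> ch h; have : (x - 1) ^+ 2 = 0.
  rewrite sqrrB h (mulrn_char2 _ _ ch) /= expr1n subr0.
  by have := pcharf0 ch.
by move/eqP; rewrite expf_eq0 /= subr_eq0 => /eqP.
Qed.

Lemma one_ne_m1 : (1 : algC) != -1.
Proof.
apply/eqP => h; have : (1 : algC) *+ 2 == 0 by rewrite mulr2n {2}h subrr.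
by rewrite pnatr_eq0.
Qed.

Lemma i_odd_ne1 j : odd j -> 'i ^+ j != 1 :> algC.
Proof.
move=> oj; apply/eqP => h.
have : ('i ^+ j) ^+ 2 = -1 :> algC by rewrite exprAC sqrCi -signr_odd oj expr1.
by rewrite h expr1n => /eqP; apply/negP; exact: one_ne_m1.
Qed.

Unset Implicit Arguments.

Theorem mainTheorem4 (p m : nat) (F : finFieldType) (alpha : F)
    (L : finFieldType) (beta : L) (k : nat)
    (P : algC -> Prop) (phi : L -> algC) (zeta : algC) :
  prime p -> odd p -> (0 < m)%N -> #|F| = (p ^ m)%N ->
  (#|F|.-1).-primitive_root alpha ->
  (2 \in [pchar L])%N -> beta ^+ #|F|.-1 = 1 ->
  k.-primitive_root beta -> (1 < k)%N ->
  prime_ideal_Zring k P -> P 2 ->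
  iso_mod beta k P phi ->
  zeta ^+ k = 1 -> P (phi beta - zeta) ->
  #|F| = 1 %[mod 4] ->
  let chi := mchar alpha zeta in
  let eta14chi := fun x => mchar alpha 'i x * chi x in
  let eta34chi := fun x => mchar alpha ('i ^+ 3) x * chi x in
  let S2beta := ((slce_poly alpha L)^`N(2)).[beta] in
  (#|F| = 1 %[mod 8] ->
     (S2beta = 0 <->
      in_8P_ext P (4 * k)
        (2 * Ksum alpha chi - (1 - 'i) * Ksum alpha eta14chi
                            - (1 + 'i) * Ksum alpha eta34chi))) /\
  (#|F| = 5 %[mod 8] ->
     (S2beta = 0 <->
      in_8P_ext P (4 * k)
        (4 + 2 * Ksum alpha chi + (1 - 'i) * Ksum alpha eta14chi
                                + (1 + 'i) * Ksum alpha eta34chi))).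
Proof.
move=> pp op m0 cF pa ch bT pb k1 HP P2 iso zk hb cF4 chi eta14chi eta34chi S2beta.
have F0 : (0 < #|F|)%N by rewrite cF expn_gt0 prime_gt0.
have eF := prednK F0.
have d4 : (4 %| #|F|.-1)%N by move: cF4; rewrite -eF; lia.
have d2 : (2 %| #|F|.-1)%N by apply: dvdn_trans d4.
have k0 : (0 < k)%N by lia.
have kT : (k %| #|F|.-1)%N by rewrite (prim_order_dvd pb) bT.
have ok : odd k.
  apply/negPn/negP => ek.
  have ek2 : (k./2 * 2 = k)%N by rewrite muln2 -{2}(odd_double_half k) (negbTE ek).
  have h1 : (beta ^+ k./2) ^+ 2 = 1 by rewrite -exprM ek2 (prim_expr_order pb).
  have := char2_sq ch h1; move/eqP; rewrite -(prim_order_dvd pb) => hd.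
  have := dvdn_leq _ hd; lia.
have zT : zeta ^+ #|F|.-1 = 1 by rewrite -(divnK kT) mulnC exprM zk expr1n.
have zh : zeta ^+ (#|F|.-1)./2 = 1.
  have e2 : ((#|F|.-1)./2 * 2 = #|F|.-1)%N.
    by rewrite muln2 -{2}(odd_double_half #|F|.-1) (_ : odd _ = false) //; apply/negbTE; rewrite -dvdn2.
  have : (k %| (#|F|.-1)./2)%N by rewrite -(@Gauss_dvdl k _ 2) ?coprimen2 // e2.
  by move/divnK <-; rewrite mulnC exprM zk expr1n.
have iT : 'i ^+ #|F|.-1 = 1 :> algC by rewrite -(divnK d4) mulnC exprM i4 expr1n.
have i3T : ('i ^+ 3) ^+ #|F|.-1 = 1 :> algC by rewrite exprAC iT expr1n.
have [hZ hadd hmul h1 [hinj _]] := iso.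
have z1 : zeta != 1.
  apply/eqP => e; rewrite e in hb.
  have hb1 : P (phi beta - phi 1) := cg_trans k0 HP hb (cg_sym k0 HP h1).
  have Fb : F2adj beta beta by have := F2adj_pow beta 1; rewrite expr1.
  have F1 : F2adj beta 1 by have := F2adj_pow beta 0; rewrite expr0.
  have e1 := hinj _ _ Fb F1 hb1.
  have := prim_order_dvd pb 1; rewrite expr1 e1 eqxx => hd.
  have := dvdn_leq (isT : (0 < 1)%N) hd; lia.
have v2 : 'i * zeta != 1.
  apply/eqP => e; have : ('i * zeta) ^+ k = 1 by rewrite e expr1n.
  by rewrite exprMn zk mulr1; apply/eqP; exact: i_odd_ne1.
have v3 : 'i ^+ 3 * zeta != 1.
  apply/eqP => e; have : ('i ^+ 3 * zeta) ^+ k = 1 by rewrite e expr1n.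
  by rewrite exprMn zk mulr1 -exprM; apply/eqP; apply: i_odd_ne1; rewrite oddM ok.
have m0C w : mchar alpha w 0 = 0 by rewrite /mchar eqxx.
have S1 := @S_val F alpha chi zeta pa d2 (m0C _) (fun n => mchar_pow n pa zT) zT z1.
have S2 : Sv alpha ('i * zeta) = - (('i * zeta) ^+ (#|F|.-1)./2 * (Ksum alpha eta14chi + 1)).
  apply: S_val => //; first by rewrite /eta14chi m0C mul0r.
    by move=> n; rewrite /eta14chi /chi !mchar_pow // exprMn.
  by rewrite exprMn iT zT mulr1.
have S3 : Sv alpha ('i ^+ 3 * zeta) = - (('i ^+ 3 * zeta) ^+ (#|F|.-1)./2 * (Ksum alpha eta34chi + 1)).
  apply: S_val => //; first by rewrite /eta34chi m0C mul0r.
    by move=> n; rewrite /eta34chi /chi !mchar_pow // [RHS]exprMn.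
  by rewrite exprMn i3T zT mulr1.
rewrite zh mul1r in S1; rewrite !exprMn zh !mulr1 in S2 S3.
have K8 := key8 zeta pa d2.
set y := \sum_(n <- index_iota 0 #|F|.-1 | slce alpha n && (2 <= n %% 4)%N) zeta ^+ n in K8.
have zy : Zring k y.
  by apply: Zring_sum => // n _; apply: Zring_exp => //; apply: Zring_root.
have hS2 : S2beta = 0 <-> P y.
  have b0 : beta != 0.
    apply/eqP => e; move: bT; rewrite e expr0n (gtn_eqF (prim_order_gt0 pa)) => /eqP.
    by rewrite eq_sym oner_eq0.
  rewrite /S2beta /slce_poly (S2_zero _ _ ch b0).
  exact: (sum_zero _ _ k0 HP iso zk hb).
have hE : in_8P_ext P (4 * k) (- (8 * y)) <-> P y := ideal_ext ok HP zy.
have ih4 : 'i ^+ (#|F|.-1)./2 = 'i ^+ ((#|F|.-1)./2 %% 4) :> algC by rewrite expr_mod // i4.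
split => c8.
- have hm : ((#|F|.-1)./2 %% 4 = 0)%N by move: c8; rewrite -eF; lia.
  rewrite hm expr0 in ih4; rewrite ih4 in S2 S3.
  have e : 2 * Ksum alpha chi - (1 - 'i) * Ksum alpha eta14chi - (1 + 'i) * Ksum alpha eta34chi
     = - (8 * y).
    rewrite K8 S1 S2 S3; ring.
  by rewrite e hS2 hE.
- have hm : ((#|F|.-1)./2 %% 4 = 2)%N by move: c8; rewrite -eF; lia.
  rewrite hm sqrCi in ih4; rewrite ih4 in S2 S3.
  have e : 4 + 2 * Ksum alpha chi + (1 - 'i) * Ksum alpha eta14chi + (1 + 'i) * Ksum alpha eta34chi
     = - (8 * y).
    rewrite K8 S1 S2 S3; ring.
  by rewrite e hS2 hE.
Qed.
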